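(* Assume $|B|<m$ and let $\mathcal S_3=\{(w_1+uw_2,w_3)\in\mathcal R^m: w_1\in\Delta_A,\ w_2\in\Delta_B^c,\ w_3\in\Delta_C\}$. Then $\mathscr C_{\mathcal S_3}$ is a linear code over $R$ with parameters $\big(q^{|A|+|C|}(q^m-q^{|B|}),\ q^{m+|A|+|C|},\ 2(q-1)q^{|A|+|C|-1}(q^m-q^{|B|})\big)$ and Lee weight distribution: weight $0$ with frequency $1$; weight $2(q-1)q^{|A|+|C|-1}(q^m-q^{|B|})$ with frequency $q^{m+|A|+|C|}-2q^{m-|B|}+q^{m-|A\cup B|}$; weight $(q-1)q^{|A|+|C|-1}(2q^m-q^{|B|})$ with frequency $2(q^{m-|B|}-q^{m-|A\cup B|})$; weight $2(q-1)q^{m+|A|+|C|-1}$ with frequency $q^{m-|A\cup B|}-1$. Consequently $\mathscr C_{\mathcal S_3}$ is a $2$-weight code if $A\cup B=[m]$ or $A\subseteq B$, and a $3$-weight code otherwise.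
   Context: Let $q$ be a prime power, $\mathbb F_q$ the field of order $q$, $m\ge 2$ an integer and $[m]=\{1,\dots,m\}$. For $v\in\mathbb F_q^m$, $\mathrm{supp}(v)=\{i:v_i\ne0\}$ and $wt_H$ is Hamming weight. For nonempty $P\subseteq[m]$, $\Delta_P=\{v\in\mathbb F_q^m:\mathrm{supp}(v)\subseteq P\}$, $\Delta_P^c=\mathbb F_q^m\setminus\Delta_P$, $\Delta_P^*=\Delta_P\setminus\{\mathbf 0\}$. $A,B,C$ denote nonempty subsets of $[m]$. Let $R=\mathbb F_q[u]/\langle u^2\rangle$ and $\mathcal R=R\times\mathbb F_q$; each element of $\mathcal R^m$ is uniquely $(d+ue,f)$ with $d,e,f\in\mathbb F_q^m$. Define $\langle(d_1+ue_1,f_1),(d_2+ue_2,f_2)\rangle=(d_1+ue_1)\cdot(d_2+ue_2)+u\,f_1\cdot f_2\in R$, where $x\cdot y=\sum_i x_iy_i$. For a nonempty $\mathcal D\subseteq\mathcal R^m$ listed in a fixed order, $\mathscr C_{\mathcal D}=\{(\langle r,s\rangle)_{s\in\mathcal D}: r\in\mathcal R^m\}\subseteq R^{|\mathcal D|}$, an $R$-submodule (linear code over $R$). The Gray map $\Phi:R^n\to\mathbb F_q^{2n}$ is $\Phi(d+ue)=(e,d+e)$ for $d,e\in\mathbb F_q^n$; the Lee weight is $wt_L(x)=wt_H(\Phi(x))$. A code over $R$ has parameters $(n,K,D)$ if it has length $n$, cardinality $K$ and minimum nonzero Lee weight $D$. A $t$-weight code has exactly $t$ distinct nonzero weights. 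*)

(* Defs.v *)
From HB Require Import structures.
From mathcomp Require Import all_boot all_order all_algebra.
Set Implicit Arguments. Unset Strict Implicit. Unset Printing Implicit Defensive.
Import Order.TTheory GRing.Theory.
Local Open Scope ring_scope.

Section Codes.
Variables (F : finFieldType) (m : nat).

Definition vec := 'rV[F]_m.

Definition dot (x y : vec) : F := \sum_(i < m) x ord0 i * y ord0 i.

Definition supp (v : vec) : {set 'I_m} := [set i | v ord0 i != 0].

Definition Delta (P : {set 'I_m}) : {set vec} := [set v | supp v \subset P].
Definition DeltaC (P : {set 'I_m}) : {set vec} := ~: Delta P.

(* R = F[u]/<u^2>: the pair (a, b) stands for a + u b. *)
Definition Rel := (F * F)%type.
Definition Radd (x y : Rel) : Rel := (x.1 + y.1, x.2 + y.2).
Definition Rmul (x y : Rel) : Rel := (x.1 * y.1, x.1 * y.2 + x.2 * y.1).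
Definition R0 : Rel := (0, 0).

(* element of the module calR^m = (R x F_q)^m : ((d, e), f) stands for (d + u e, f) *)
Definition Tm := ((vec * vec) * vec)%type.

(* <(d1+u e1, f1), (d2+u e2, f2)> = (d1+u e1).(d2+u e2) + u f1.f2 *)
Definition ip (r s : Tm) : Rel :=
  (dot r.1.1 s.1.1,
   dot r.1.1 s.1.2 + dot r.1.2 s.1.1 + dot r.2 s.2).

(* codewords of C_D, indexed by the elements of D (coordinates outside D are 0) *)
Definition codeword (D : {set Tm}) (r : Tm) : {ffun Tm -> Rel} :=
  [ffun s => if s \in D then ip r s else R0].

Definition code (D : {set Tm}) : {set {ffun Tm -> Rel}} :=
  [set codeword D r | r : Tm].

Definition zero_word : {ffun Tm -> Rel} := [ffun _ => R0].

(* Lee weight of a + u b is wt_H(b, a + b) (Gray map) *)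
Definition lee_el (x : Rel) : nat :=
  addn (x.2 != 0) (x.1 + x.2 != 0).

Definition lee_weight (D : {set Tm}) (c : {ffun Tm -> Rel}) : nat :=
  (\sum_(s in D) lee_el (c s))%N.

Definition is_R_linear (D : {set Tm}) (K : {set {ffun Tm -> Rel}}) : Prop :=
  zero_word \in K /\
  (forall c1 c2, c1 \in K -> c2 \in K -> [ffun s => Radd (c1 s) (c2 s)] \in K) /\
  (forall (a : Rel) c, c \in K -> [ffun s => Rmul a (c s)] \in K).

Definition min_lee_weight (D : {set Tm}) (K : {set {ffun Tm -> Rel}}) (d : nat)
  : Prop :=
  (exists2 c, c \in K & (c != zero_word) /\ lee_weight D c = d) /\
  (forall c, c \in K -> c != zero_word -> (d <= lee_weight D c)%N).

Definition freq (D : {set Tm}) (K : {set {ffun Tm -> Rel}}) (w : nat) : nat :=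
  #|[set c in K | lee_weight D c == w]|.

Definition num_weights (D : {set Tm}) (K : {set {ffun Tm -> Rel}}) : nat :=
  size (undup [seq lee_weight D c | c <- enum K & c != zero_word]).

Definition S3 (A B C : {set 'I_m}) : {set Tm} :=
  [set s : Tm | [&& s.1.1 \in Delta A, s.1.2 \in DeltaC B & s.2 \in Delta C]].

End Codes.

(* Main.v *)
Require Import Defs.
From HB Require Import structures.
From mathcomp Require Import all_boot all_order all_algebra ring zify.
Set Implicit Arguments. Unset Strict Implicit. Unset Printing Implicit Defensive.
Import GRing.Theory.
Local Open Scope ring_scope.

Section Aux.
Variables (F : finFieldType) (m : nat).
Local Notation vec := 'rV[F]_m.
Local Notation q := #|F|.

Definition ev (i : 'I_m) (c : F) : vec := \row_(j < m) (if j == i then c else 0).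
Definition proj (P : {set 'I_m}) (x : vec) : vec :=
  \row_(j < m) (if j \in P then x 0 j else 0).

Lemma DeltaP (P : {set 'I_m}) (v : vec) :
  reflect (forall j, j \notin P -> v 0 j = 0) (v \in Delta F P).
Proof.
rewrite inE; apply: (iffP subsetP) => H j.
  move=> jP; apply/eqP; apply: contraNT jP => vj; apply: H; by rewrite inE.
rewrite inE => vj; apply: contraNT vj => jP; by rewrite H.
Qed.

Lemma dotE (x y : vec) : dot x y = \sum_(i < m) x 0 i * y 0 i.
Proof. by []. Qed.

Lemma dotDl (x y z : vec) : dot (x + y) z = dot x z + dot y z.
Proof. rewrite !dotE -big_split /=; apply: eq_bigr => i _; by rewrite mxE mulrDl. Qed.
Lemma dotDr (x y z : vec) : dot x (y + z) = dot x y + dot x z.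
Proof. rewrite !dotE -big_split /=; apply: eq_bigr => i _; by rewrite mxE mulrDr. Qed.
Lemma dotZl (c : F) (x y : vec) : dot (c *: x) y = c * dot x y.
Proof. rewrite !dotE mulr_sumr; apply: eq_bigr => i _; by rewrite mxE mulrA. Qed.
Lemma dot0l (y : vec) : dot 0 y = 0.
Proof. rewrite dotE big1 // => i _; by rewrite mxE mul0r. Qed.
Lemma dot0r (y : vec) : dot y 0 = 0.
Proof. rewrite dotE big1 // => i _; by rewrite mxE mulr0. Qed.
Lemma dotNl (x y : vec) : dot (- x) y = - dot x y.
Proof. rewrite !dotE -sumrN; apply: eq_bigr => i _; by rewrite mxE mulNr. Qed.

Lemma dot_ev (x : vec) i c : dot x (ev i c) = x 0 i * c.
Proof.
rewrite dotE (bigD1 i) //= big1 ?addr0; first by rewrite mxE eqxx.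
by move=> j ji; rewrite mxE (negbTE ji) mulr0.
Qed.

Lemma ev_add i c d : ev i c + ev i d = ev i (c + d).
Proof. apply/rowP => j; rewrite !mxE; case: (j == i) => //; by rewrite addr0. Qed.
Lemma ev0 i : ev i 0 = 0.
Proof. apply/rowP => j; rewrite !mxE; by case: (j == i). Qed.

Lemma ev_cancel (v : vec) i c : v + ev i c + ev i (- c) = v.
Proof. by rewrite -addrA ev_add subrr ev0 addr0. Qed.

Lemma dot_disj (P : {set 'I_m}) (x v : vec) :
  x \in Delta F (~: P) -> v \in Delta F P -> dot x v = 0.
Proof.
move=> /DeltaP hx /DeltaP hv; rewrite dotE big1 // => i _.
case: (boolP (i \in P)) => iP; first by rewrite hx ?mul0r // inE iP.
by rewrite hv ?mulr0.
Qed.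

Lemma dot_proj (P : {set 'I_m}) (x v : vec) :
  v \in Delta F P -> dot (proj P x) v = dot x v.
Proof.
move=> /DeltaP hv; rewrite !dotE; apply: eq_bigr => i _; rewrite mxE.
by case: ifP => // /negbT iP; rewrite hv ?mulr0.
Qed.

Lemma Delta0 (P : {set 'I_m}) : (0 : vec) \in Delta F P.
Proof. by apply/DeltaP => j _; rewrite mxE. Qed.

Lemma DeltaD_ev (P : {set 'I_m}) (v : vec) i c : v \in Delta F P -> i \in P -> v + ev i c \in Delta F P.
Proof.
move=> /DeltaP hv iP; apply/DeltaP => j jP; rewrite !mxE hv //.
case: eqP => [ji|]; last by rewrite addr0.
by rewrite ji iP in jP.
Qed.

Lemma DeltaCD_ev (P : {set 'I_m}) (v : vec) i c : v \in DeltaC F P -> i \in P -> v + ev i c \in DeltaC F P.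
Proof.
rewrite /DeltaC !in_setC => hv iP; apply: contra hv => /DeltaP h; apply/DeltaP => j jP.
have := h j jP; rewrite !mxE; case: eqP => [ji|]; last by rewrite addr0.
by rewrite ji iP in jP.
Qed.

Lemma ev_in_Delta (P : {set 'I_m}) i c : i \in P -> ev i c \in Delta F P.
Proof. by move=> iP; rewrite -[ev i c]add0r; apply: DeltaD_ev => //; apply: Delta0. Qed.

Lemma proj_in (P : {set 'I_m}) (x : vec) : proj P x \in Delta F P.
Proof. by apply/DeltaP => j jP; rewrite mxE (negbTE jP). Qed.

Lemma card_Delta (P : {set 'I_m}) : #|Delta F P| = (q ^ #|P|)%N.
Proof.
have -> : Delta F P = [set \row_(j < m) (f : {ffun 'I_m -> F}) j | f in pffun_on (0:F) P predT].
  apply/setP => v; apply/DeltaP/imsetP => [h|[f hf ->] j jP].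
    exists [ffun j => v 0 j]; last by apply/rowP => j; rewrite !mxE ffunE.
    apply/pffun_onP; split=> //; apply/subsetP => j; rewrite inE ffunE.
    by apply: contraR => /h ->.
  rewrite mxE; case/pffun_onP: hf => /subsetP hs _.
  by apply/eqP; apply: contraR jP => /hs.
rewrite card_in_imset ?card_pffun_on.
  by [].
move=> f g _ _ /rowP e; apply/ffunP => j; have := e j; by rewrite !mxE.
Qed.


Lemma notDeltaP (P : {set 'I_m}) (x : vec) :
  ~~ (x \in Delta F P) -> exists2 i, i \notin P & x 0 i != 0.
Proof.
move=> h; have : ~~ [forall j, (j \notin P) ==> (x 0 j == 0)].
  apply: contra h => /forallP H; apply/DeltaP => j jP; apply/eqP.
  by have := H j; rewrite jP.
by rewrite negb_forall => /existsP [j]; rewrite negb_imply => /andP[h1 h2]; exists j.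
Qed.

End Aux.
Lemma transl (F : finFieldType) (X : finType) (S : {set X}) (g : X -> F) (tau : F -> X -> X) :
  (forall t s, s \in S -> tau t s \in S) ->
  (forall t s, s \in S -> g (tau t s) = g s + t) ->
  (forall t s, tau (- t) (tau t s) = s) ->
  (#|[set s in S | g s != 0%R]| * #|F| = (#|F| - 1) * #|S|)%N.
Proof.
move=> P1 P2 P3.
set Z := [set s in S | g s == 0].
have ZS : forall z, z \in Z -> z \in S by move=> z; rewrite inE => /andP[].
have Zg : forall z, z \in Z -> g z = 0 by move=> z; rewrite inE => /andP[_ /eqP].
have inj : forall T : {set F}, {in setX T Z &, injective (fun p => tau p.1 p.2)}.
  move=> T [t z] [t' z'] /setXP[_ hz] /setXP[_ hz'] /= e.
  have et : t = t'.
    have := congr1 g e; rewrite !P2 ?ZS // !Zg // !add0r //.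
  move: e; rewrite -et => e.
  by rewrite -(P3 t z) e P3 et.
have eS : S = [set tau p.1 p.2 | p in setX [set: F] Z].
  apply/setP => s; apply/idP/imsetP => [hs|[[t z] /setXP[_ hz] ->]]; last by apply: P1; apply: ZS.
  exists (g s, tau (- g s) s).
    apply/setXP; split; first by rewrite inE.
    by rewrite inE P1 // P2 // subrr eqxx.
  by rewrite /= -{1}(opprK (g s)) P3.
have eN : [set s in S | g s != 0] = [set tau p.1 p.2 | p in setX [set~ 0] Z].
  apply/setP => s; rewrite inE; apply/andP/imsetP => [[hs gs]|[[t z] /setXP[ht hz] ->]].
    exists (g s, tau (- g s) s).
      apply/setXP; split; first by rewrite !inE.
      by rewrite inE P1 // P2 // subrr eqxx.
    by rewrite /= -{1}(opprK (g s)) P3.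
  split; first by apply: P1; apply: ZS.
  by rewrite P2 ?ZS // Zg // add0r; rewrite !inE in ht.
rewrite eN {1}eS !card_in_imset ?inj // !cardsX cardsC1 cardsT.
idtac.
by rewrite subn1 mulnAC -mulnA.


Qed.

Section Main.
Variables (F : finFieldType) (m : nat) (A B C : {set 'I_m}).
Local Notation vec := 'rV[F]_m.
Local Notation q := #|F|.
Local Notation D := (S3 F A B C).

Definition gf (al de ga : vec) (s : Tm F m) : F := dot al s.1.1 + dot de s.1.2 + dot ga s.2.

Lemma D_X : D = setX (setX (Delta F A) (DeltaC F B)) (Delta F C).
Proof. apply/setP => [[[x y] z]]. by rewrite /S3 in_set !in_setX /= andbA. Qed.

Lemma cnt_gen al de ga :
  ~~ (al \in Delta F (~:A)) || ~~ (ga \in Delta F (~:C)) || ~~ (de \in Delta F (~:B)) ->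
  (#|[set s in D | gf al de ga s != 0%R]| * q = (q - 1) * #|D|)%N.
Proof.
rewrite D_X; case/orP; first case/orP.
- case/notDeltaP => i; rewrite inE negbK => iA ai.
  apply: (@transl F _ _ _ (fun t s => ((s.1.1 + ev i (t / al 0 i), s.1.2), s.2))).
  + move=> t [[x y] z] /setXP[/setXP[hx hy] hz] /=.
    by apply/setXP; split => //; apply/setXP; split => //; apply: DeltaD_ev.
  + move=> t [[x y] z] _; rewrite /gf /= dotDr dot_ev mulrC divfK //.
    ring.
  + by move=> t [[x y] z] /=; rewrite mulNr ev_cancel.
- case/notDeltaP => i; rewrite inE negbK => iC ai.
  apply: (@transl F _ _ _ (fun t s => (s.1, s.2 + ev i (t / ga 0 i)))).
  + move=> t [[x y] z] /setXP[/setXP[hx hy] hz] /=.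
    by apply/setXP; split => //; [apply/setXP | apply: DeltaD_ev].
  + move=> t [[x y] z] _; rewrite /gf /= dotDr dot_ev mulrC divfK //.
    by rewrite addrA.
  + by move=> t [[x y] z] /=; rewrite mulNr ev_cancel.
- case/notDeltaP => i; rewrite inE negbK => iB ai.
  apply: (@transl F _ _ _ (fun t s => ((s.1.1, s.1.2 + ev i (t / de 0 i)), s.2))).
  + move=> t [[x y] z] /setXP[/setXP[hx hy] hz] /=.
    by apply/setXP; split => //; apply/setXP; split => //; apply: DeltaCD_ev.
  + move=> t [[x y] z] _; rewrite /gf /= dotDr dot_ev mulrC divfK //.
    ring.
  + by move=> t [[x y] z] /=; rewrite mulNr ev_cancel.
Qed.

Lemma nz_coord (x : vec) : x != 0 -> exists i, x 0 i != 0.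
Proof.
move=> nz; have : ~~ (x \in Delta F set0).
  by apply: contra nz => /DeltaP h; apply/eqP/rowP => j; rewrite h ?inE // mxE.
by case/notDeltaP => i _ h; exists i.
Qed.

Lemma card_W (de : vec) : de != 0 ->
  (#|[set w : vec | dot de w != 0%R]| * q = (q - 1) * q ^ m)%N.
Proof.
case/nz_coord => i hi.
have -> : (q ^ m = #|[set: vec]|)%N by rewrite cardsT card_mx mul1n.
have -> : [set w : vec | dot de w != 0%R] = [set w in [set: vec] | dot de w != 0%R].
  by apply/setP => w; rewrite !inE.
apply: (@transl F _ _ _ (fun t w => w + ev i (t / de 0 i))).
- by move=> *; rewrite inE.
- by move=> t w _; rewrite dotDr dot_ev mulrC divfK.
- by move=> t w; rewrite mulNr ev_cancel.
Qed.

Lemma cnt_exc al de ga :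
  al \in Delta F (~:A) -> ga \in Delta F (~:C) -> de \in Delta F (~:B) ->
  [set s in D | gf al de ga s != 0%R] =
  setX (setX (Delta F A) [set w : vec | dot de w != 0%R]) (Delta F C).
Proof.
move=> hal hga hde; apply/setP => [[[x y] z]]; rewrite in_set D_X !in_setX /= /gf.
case hx: (x \in Delta F A) => //=; case hz: (z \in Delta F C); rewrite /= ?andbF //.
rewrite (dot_disj hal hx) (dot_disj hga hz) add0r addr0 andbT [in RHS]inE andbT.
case hy: (y \in Delta F B).
  by rewrite /DeltaC in_setC hy (dot_disj hde hy) eqxx.
by rewrite /DeltaC in_setC hy.
Qed.

Lemma card_sum (X : finType) (S : {set X}) (P : pred X) :
  #|[set s in S | P s]| = (\sum_(s in S) (P s : nat))%N.
Proof.
rewrite -sum1_card (eq_bigl (fun s => (s \in S) && P s)); last by move=> s; rewrite inE.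
rewrite big_mkcondr /=; apply: eq_bigr => s _; by case: (P s).
Qed.

Lemma wt_cw (r : Tm F m) : lee_weight D (codeword D r) =
  (#|[set s in D | gf r.1.2 r.1.1 r.2 s != 0%R]| +
   #|[set s in D | gf (r.1.1 + r.1.2) r.1.1 r.2 s != 0%R]|)%N.
Proof.
rewrite !card_sum -big_split /=; apply: eq_bigr => s hs.
rewrite /codeword ffunE hs /lee_el /ip /gf /=.
congr (_ + _)%N; congr (~~ (_ == _)); rewrite ?dotDl; ring.
Qed.

Lemma card_D : #|D| = (q ^ #|A| * (q ^ m - q ^ #|B|) * q ^ #|C|)%N.
Proof.
rewrite D_X !cardsX !card_Delta; congr (_ * _ * _)%N.
have := cardsC (Delta F B); rewrite card_mx mul1n card_Delta => <-.
by rewrite /DeltaC addKn.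
Qed.

Lemma q_gt1 : (1 < q)%N.
Proof. by rewrite (cardD1 0) (cardD1 1) !inE oner_neq0. Qed.

Hypothesis hA : A != set0.
Hypothesis hm : (0 < m)%N.

Definition Tv := ((q - 1) * q ^ (#|A| + #|C| - 1) * (q ^ m - q ^ #|B|))%N.
Definition Ev := ((q - 1) * q ^ (m + #|A| + #|C| - 1))%N.

Lemma cnt_val al de ga : #|[set s in D | gf al de ga s != 0%R]| =
  if [&& al \in Delta F (~:A), ga \in Delta F (~:C) & de \in Delta F (~:B)]
  then (if de == 0%R then 0%N else Ev) else Tv.
Proof.
have qp : (0 < q)%N by apply: ltn_trans q_gt1.
have aP : (0 < #|A|)%N by rewrite card_gt0.
case: ifP => [/and3P[h1 h2 h3]|h].
  rewrite cnt_exc // cardsX cardsX.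
  case: eqP => [->|/eqP nz].
    have -> : [set w : vec | dot 0 w != 0%R] = set0.
      by apply/setP => w; rewrite !inE dot0l eqxx.
    by rewrite cards0 muln0 mul0n.
  apply/eqP; rewrite -(eqn_pmul2r qp); apply/eqP.
  rewrite mulnAC -[(_ * _ * #|F|)%N]mulnA card_W // !card_Delta /Ev.
  have e1 : (q ^ (m + #|A| + #|C| - 1) * q = q ^ m * q ^ #|A| * q ^ #|C|)%N.
    rewrite -expnSr -!expnD; congr (expn _ _); lia.
  rewrite -[((_ - 1) * _ * _)%N]mulnA e1.
  ring.
apply/eqP; rewrite -(eqn_pmul2r qp); apply/eqP.
rewrite cnt_gen; last by move/negbT: h; rewrite !negb_and orbA.
rewrite card_D /Tv.
have e2 : (q ^ (#|A| + #|C| - 1) * q = q ^ #|A| * q ^ #|C|)%N.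
  rewrite -expnSr -!expnD; congr (expn _ _); lia.
have -> : (q ^ #|A| * (q ^ m - q ^ #|B|) * q ^ #|C| = q ^ (#|A| + #|C| - 1) * q * (q ^ m - q ^ #|B|))%N by rewrite e2; ring.
ring.
Qed.

Definition Rp : {set Tm F m} := setX (setX [set: vec] (Delta F A)) (Delta F C).

Lemma cw_proj (r : Tm F m) :
  codeword D r = codeword D ((r.1.1, proj A r.1.2), proj C r.2).
Proof.
apply/ffunP => [[[x y] z]]; rewrite !ffunE; case: ifP => // hs.
move: hs; rewrite D_X => /setXP[/setXP[h1 _] h3].
by rewrite /ip /= !dot_proj.
Qed.

Lemma proj_Rp (r : Tm F m) : ((r.1.1, proj A r.1.2), proj C r.2) \in Rp.
Proof. by rewrite !in_setX /= in_setT !proj_in. Qed.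

Hypothesis hB : (#|B| < m)%N.

Lemma exists_notB : exists j, j \notin B.
Proof.
have : (0 < #|~: B|)%N by rewrite cardsCs setCK card_ord subn_gt0.
by case/card_gt0P => j; rewrite inE => hj; exists j.
Qed.

Lemma ev_notin (P : {set 'I_m}) j : j \notin P -> ev j 1 \in DeltaC F P.
Proof.
move=> hj; rewrite /DeltaC in_setC; apply/negP => /DeltaP h.
by have := h j hj; rewrite mxE eqxx => /eqP; rewrite oner_eq0.
Qed.

Lemma cw_inj : {in Rp &, injective (codeword D)}.
Proof.
move=> [[d e] f] [[d' e'] f'] /setXP[/setXP[_ he] hf] /setXP[/setXP[_ he'] hf'] H.
have key : forall x y z, x \in Delta F A -> y \in DeltaC F B -> z \in Delta F C ->
    dot d y + dot e x + dot f z = dot d' y + dot e' x + dot f' z.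
  move=> x y z hx hy hz.
  have := congr1 (fun c : {ffun _ -> _} => (c ((x, y), z)).2) H.
  have hs : ((x, y), z) \in D by rewrite D_X !in_setX /= hx hy hz.
  by rewrite /= !ffunE hs /ip /=.
case: exists_notB => j hj.
have hdj : d 0 j = d' 0 j.
  have := key 0 (ev j 1) 0 (Delta0 _ _) (ev_notin hj) (Delta0 _ _).
  by rewrite !dot0r !addr0 !dot_ev !mulr1.
have hd : d = d'.
  apply/rowP => i; case: (boolP (i \in B)) => hi.
    have := key 0 (ev j 1 + ev i 1) 0 (Delta0 _ _) (DeltaCD_ev 1 (ev_notin hj) hi) (Delta0 _ _).
    by rewrite !dot0r !addr0 !dotDr !dot_ev !mulr1 hdj => /addrI.
  have := key 0 (ev i 1) 0 (Delta0 _ _) (ev_notin hi) (Delta0 _ _).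
  by rewrite !dot0r !addr0 !dot_ev !mulr1.
subst d'.
have hee : e = e'.
  apply/rowP => i; case: (boolP (i \in A)) => hi.
    have := key (ev i 1) (ev j 1) 0 (ev_in_Delta 1 hi) (ev_notin hj) (Delta0 _ _).
    by rewrite !dot0r !addr0 !dot_ev !mulr1 => /addrI.
  by move/DeltaP: he => -> //; move/DeltaP: he' => -> //.
have hff : f = f'.
  apply/rowP => i; case: (boolP (i \in C)) => hi.
    have := key 0 (ev j 1) (ev i 1) (Delta0 _ _) (ev_notin hj) (ev_in_Delta 1 hi).
    by rewrite !dot0r !addr0 !dot_ev !mulr1 => /addrI.
  by move/DeltaP: hf => -> //; move/DeltaP: hf' => -> //.
by rewrite hee hff.
Qed.

Lemma K_img : code D = codeword D @: Rp.
Proof.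
apply/setP => c; apply/imsetP/imsetP => [[r _ ->]|[r _ ->]]; last by exists r.
by exists ((r.1.1, proj A r.1.2), proj C r.2); [apply: proj_Rp | apply: cw_proj].
Qed.

Lemma card_sub_img (X Y : finType) (f : X -> Y) (S : {set X}) (P : pred Y) :
  {in S &, injective f} ->
  #|[set y in f @: S | P y]| = #|[set x in S | P (f x)]|.
Proof.
move=> inj.
have -> : [set y in f @: S | P y] = f @: [set x in S | P (f x)].
  apply/setP => y; rewrite inE; apply/andP/imsetP => [[/imsetP[x hx ->] hp]|[x]].
    by exists x => //; rewrite inE hx.
  by rewrite inE => /andP[hx hp] ->; split => //; apply: imset_f.
rewrite card_in_imset // => x y; rewrite !inE => /andP[hx _] /andP[hy _]; exact: inj.
Qed.

Lemma Tv_gt0 : (0 < Tv)%N.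
Proof.
have q1 := q_gt1; rewrite /Tv !muln_gt0 subn_gt0 q1 expn_gt0 (ltnW q1) /=.
by rewrite subn_gt0 ltn_exp2l.
Qed.

Lemma Tv_lt_Ev : (Tv < Ev)%N.
Proof.
have q1 := q_gt1; have aP : (0 < #|A|)%N by rewrite card_gt0.
rewrite /Tv /Ev.
have -> : (q ^ (m + #|A| + #|C| - 1) = q ^ (#|A| + #|C| - 1) * q ^ m)%N.
  rewrite -expnD; congr (expn _ _); lia.
rewrite -mulnA ltn_pmul2l ?subn_gt0 // ltn_pmul2l ?expn_gt0 ?(ltnW q1) //.
by rewrite ltn_subrL !expn_gt0 (ltnW q1).
Qed.

Definition Z1 (r : Tm F m) :=
  [&& r.1.2 \in Delta F (~:A), r.2 \in Delta F (~:C) & r.1.1 \in Delta F (~:B)].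
Definition Z2 (r : Tm F m) :=
  [&& r.1.1 + r.1.2 \in Delta F (~:A), r.2 \in Delta F (~:C) & r.1.1 \in Delta F (~:B)].

Lemma wt_form (r : Tm F m) : lee_weight D (codeword D r) =
  ((if Z1 r then (if r.1.1 == 0%R then 0 else Ev) else Tv) +
   (if Z2 r then (if r.1.1 == 0%R then 0 else Ev) else Tv))%N.
Proof. by rewrite wt_cw !cnt_val. Qed.

Lemma wt_cases (r : Tm F m) :
  let w := lee_weight D (codeword D r) in
  [/\ (w == 0)%N = (r.1.1 == 0%R) && Z1 r,
      (w == 2 * Ev)%N = (r.1.1 != 0%R) && Z1 r && Z2 r,
      (w == Tv + Ev)%N = (r.1.1 != 0%R) && (Z1 r != Z2 r) &
      (w == 2 * Tv)%N = ~~ Z1 r && ~~ Z2 r].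
Proof.
have t0 := Tv_gt0; have te := Tv_lt_Ev.
rewrite /= wt_form; case: (eqVneq r.1.1 0%R) => [d0|nz].
  have -> : Z2 r = Z1 r by rewrite /Z1 /Z2 d0 add0r.
  rewrite /=; case: (Z1 r) => /=; split; case: eqP => //=; lia.
rewrite /=; case: (Z1 r); case: (Z2 r) => /=; split; case: eqP => //=; lia.
Qed.

Lemma K1 (P : {set 'I_m}) (e : vec) : e \in Delta F P -> (e \in Delta F (~: P)) = (e == 0).
Proof.
move=> /DeltaP he; apply/DeltaP/eqP => [h|-> j _]; last by rewrite mxE.
apply/rowP => j; rewrite mxE; case: (boolP (j \in P)) => hj; first by rewrite h // inE hj.
by rewrite he.
Qed.

Lemma K2 (e d : vec) : e \in Delta F A -> (d + e \in Delta F (~: A)) = (e == - proj A d).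
Proof.
move=> /DeltaP he; apply/DeltaP/eqP => [h|-> j].
  apply/rowP => j; rewrite !mxE; case: ifP => hj.
    by apply/eqP; rewrite -addr_eq0 addrC; apply/eqP; have := h j; rewrite inE hj !mxE; apply.
  by rewrite oppr0 he // hj.
by rewrite inE negbK !mxE => ->; rewrite subrr.
Qed.

Lemma K3 (d : vec) : (d \in Delta F (~: A)) && (d \in Delta F (~: B)) = (d \in Delta F (~: (A :|: B))).
Proof.
apply/andP/DeltaP => [[/DeltaP h1 /DeltaP h2] j|h].
  by rewrite inE negbK inE => /orP[] hj; [apply: h1 | apply: h2]; rewrite inE negbK.
by split; apply/DeltaP => j; rewrite inE negbK => hj; apply: h; rewrite !inE hj ?orbT.
Qed.

Lemma K4 (d : vec) : (proj A d == 0) = (d \in Delta F (~: A)).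
Proof.
apply/eqP/DeltaP => [h j|h]; last first.
  apply/rowP => j; rewrite !mxE; case: ifP => // jA; apply: h; by rewrite inE jA.
rewrite inE negbK => hj.
  by have := congr1 (fun v : vec => v 0 j) h; rewrite !mxE hj.
Qed.

Lemma DeltaN (P : {set 'I_m}) (v : vec) : v \in Delta F P -> - v \in Delta F P.
Proof. by move=> /DeltaP h; apply/DeltaP => j hj; rewrite mxE h ?oppr0. Qed.

Lemma card_DeltaC (P : {set 'I_m}) : #|Delta F (~: P)| = (q ^ (m - #|P|))%N.
Proof. by rewrite card_Delta cardsCs setCK card_ord. Qed.

Lemma C0 : #|[set r in Rp | (r.1.1 == 0%R) && Z1 r]| = 1%N.
Proof.
suff -> : [set r in Rp | (r.1.1 == 0%R) && Z1 r] = [set ((0 : vec, 0 : vec), 0 : vec)] by rewrite cards1.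
apply/setP => [[[d e] f]]; rewrite in_set1 in_set /Rp !in_setX /Z1 /= in_setT /=.
apply/idP/eqP => [|[-> -> ->]]; last by rewrite !Delta0 eqxx.
move=> /and5P[/andP[he hf] /eqP-> h3 h4 _]; move: h3 h4.
by rewrite (K1 he) (K1 hf) => /eqP-> /eqP->.
Qed.

Lemma C3 : #|[set r in Rp | (r.1.1 != 0%R) && Z1 r && Z2 r]| = (q ^ (m - #|A :|: B|) - 1)%N.
Proof.
suff -> : [set r in Rp | (r.1.1 != 0%R) && Z1 r && Z2 r] =
   (fun d : vec => ((d, 0 : vec), 0 : vec)) @: (Delta F (~: (A :|: B)) :\ 0).
  rewrite card_in_imset; last by move=> x y _ _ [].
  by rewrite -card_DeltaC (cardsD1 0 (Delta F (~: (A :|: B)))) Delta0 add1n subn1.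
apply/setP => [[[d e] f]]; rewrite in_set /Rp !in_setX /Z1 /Z2 /= in_setT /=.
apply/idP/imsetP.
  move=> /and5P[/andP[he hf] /and4P[nz h1 h2 h3] h4 _ _].
  move: h1 h2; rewrite (K1 he) (K1 hf) => /eqP e0 /eqP f0; subst e f.
  exists d => //; rewrite in_setD1 nz -K3 h3 andbT; by rewrite addr0 in h4.
move=> [d' hd' [-> -> ->]]; move: hd'; rewrite in_setD1 -K3 => /andP[nz /andP[h1 h2]].
by rewrite !Delta0 nz addr0 h1 h2.
Qed.

Definition iota2 (p : bool * vec) : Tm F m :=
  ((p.2, if p.1 then - proj A p.2 else 0), 0).

Definition X2 := [set d in Delta F (~: B) | d \notin Delta F (~: A)].

Lemma card_X2 : #|X2| = (q ^ (m - #|B|) - q ^ (m - #|A :|: B|))%N.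
Proof.
have -> : X2 = Delta F (~: B) :\: Delta F (~: (A :|: B)).
  apply/setP => d; rewrite /X2 in_set in_setD -K3; case: (d \in Delta F (~: B)); by rewrite ?andbT ?andbF.
rewrite cardsD (setIidPr _) ?card_DeltaC //.
by apply/subsetP => d; rewrite -K3 => /andP[].
Qed.

Lemma C2 : #|[set r in Rp | (r.1.1 != 0%R) && (Z1 r != Z2 r)]| =
  (2 * (q ^ (m - #|B|) - q ^ (m - #|A :|: B|)))%N.
Proof.
suff -> : [set r in Rp | (r.1.1 != 0%R) && (Z1 r != Z2 r)] = iota2 @: setX [set: bool] X2.
  rewrite card_in_imset ?cardsX ?cardsT ?card_bool ?card_X2 //.
  move=> [b d] [b' d'] _ /setXP[_]; rewrite inE => /andP[_ hd'] [ed] e; subst d'.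
  congr (_, _); move: e; case: b; case: b' => //.
    by move/eqP; first [rewrite oppr_eq0 | rewrite eq_sym oppr_eq0]; rewrite K4 (negbTE hd').
  by move/eqP; first [rewrite oppr_eq0 | rewrite eq_sym oppr_eq0]; rewrite K4 (negbTE hd').
apply/setP => [[[d e] f]]; rewrite in_set /Rp !in_setX /Z1 /Z2 /= in_setT /=.
apply/idP/imsetP.
  move=> /and3P[/andP[he hf] nz]; rewrite (K1 he) (K1 hf) (K2 _ he).
  case hf0: (f == 0); case hdB: (d \in Delta F (~: B)); rewrite ?andbF //= => hx.
  move/eqP: hf0 => ->.
  case: (eqVneq e 0) hx => [->|ne] /= hx.
    exists (false, d) => //; rewrite in_setX in_setT /= inE hdB /= -K4.
    by apply: contraNneq hx => ->; rewrite oppr0 eqxx.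
  move: hx; rewrite andbT => hx; have he0 : e = - proj A d by apply/eqP; move: hx; case: (e == _).
  rewrite he0 in ne *.
  exists (true, d) => //; rewrite in_setX in_setT /= inE hdB /= -K4.
  by apply: contra ne => /eqP ->; rewrite oppr0.
move=> [[b d'] /setXP[_]]; rewrite inE => /andP[hdB hdA] [-> -> ->].
have nz : d' != 0 by apply: contraNneq hdA => ->; apply: Delta0.
have hp : proj A d' != 0 by rewrite K4.
have heA : (if b then - proj A d' else 0) \in Delta F A.
  by case: b; [apply: DeltaN; apply: proj_in | apply: Delta0].
rewrite heA Delta0 nz /= (K1 heA) (K1 (Delta0 _ _)) (K2 _ heA) eqxx hdB /=.
case: b {heA} => /=; first by rewrite eqxx oppr_eq0 (negbTE hp).
by rewrite eqxx andbT [0 == _]eq_sym oppr_eq0 (negbTE hp).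
Qed.

Definition wtr (r : Tm F m) := lee_weight D (codeword D r).

Lemma part_Rp : #|Rp| =
  (#|[set r in Rp | wtr r == 0]| + #|[set r in Rp | wtr r == 2 * Tv]| +
   #|[set r in Rp | wtr r == Tv + Ev]| + #|[set r in Rp | wtr r == 2 * Ev]|)%N.
Proof.
rewrite !card_sum -sum1_card -!big_split /=; apply: eq_bigr => r _.
rewrite /wtr; case: (wt_cases r) => -> -> -> ->.
case: (eqVneq r.1.1 0%R) => [d0|nz] /=.
  have -> : Z2 r = Z1 r by rewrite /Z1 /Z2 d0 add0r.
  by case: (Z1 r).
by case: (Z1 r); case: (Z2 r).
Qed.

Lemma card_Rp : #|Rp| = (q ^ (m + #|A| + #|C|))%N.
Proof. by rewrite !cardsX cardsT card_mx mul1n !card_Delta -!expnD. Qed.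

Lemma cw0 : codeword D ((0, 0), 0) = zero_word F m.
Proof.
apply/ffunP => s; rewrite !ffunE; case: ifP => // _.
by rewrite /ip /R0 /= !dot0l !addr0.
Qed.

Lemma wt_zero : lee_weight D (zero_word F m) = 0%N.
Proof. by rewrite /lee_weight big1 // => s _; rewrite ffunE /lee_el /= addr0 eqxx. Qed.

Lemma lin : is_R_linear D (code D).
Proof.
split; first by rewrite -cw0; apply: imset_f.
split.
  move=> c1 c2 /imsetP[r1 _ ->] /imsetP[r2 _ ->].
  apply/imsetP; exists ((r1.1.1 + r2.1.1, r1.1.2 + r2.1.2), r1.2 + r2.2) => //.
  apply/ffunP => s; rewrite !ffunE; case: ifP => _.
    by rewrite /ip /Radd /= !dotDl; congr (_, _); ring.
  by rewrite /Radd /R0 /= addr0.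
move=> [a1 a2] c /imsetP[r _ ->].
apply/imsetP; exists ((a1 *: r.1.1, a1 *: r.1.2 + a2 *: r.1.1), a1 *: r.2) => //.
apply/ffunP => s; rewrite !ffunE; case: ifP => _.
  by rewrite /ip /Rmul /= !dotDl !dotZl; congr (_, _); ring.
by rewrite /Rmul /R0 /= !mulr0 addr0.
Qed.

Lemma freqE w : freq D (code D) w = #|[set r in Rp | wtr r == w]|.
Proof. by rewrite /freq K_img card_sub_img //; exact: cw_inj. Qed.

Lemma f0 : freq D (code D) 0 = 1%N.
Proof.
rewrite freqE -[RHS]C0; apply: eq_card => r; rewrite !inE /wtr.
by case: (wt_cases r) => ->.
Qed.

Lemma f3 : freq D (code D) (2 * Ev) = (q ^ (m - #|A :|: B|) - 1)%N.
Proof.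
rewrite freqE -[RHS]C3; apply: eq_card => r; rewrite !inE /wtr.
by case: (wt_cases r) => _ ->.
Qed.

Lemma f2 : freq D (code D) (Tv + Ev) = (2 * (q ^ (m - #|B|) - q ^ (m - #|A :|: B|)))%N.
Proof.
rewrite freqE -[RHS]C2; apply: eq_card => r; rewrite !inE /wtr.
by case: (wt_cases r) => _ _ ->.
Qed.

Lemma fsum : (q ^ (m + #|A| + #|C|) =
  freq D (code D) 0 + freq D (code D) (2 * Tv) + freq D (code D) (Tv + Ev) +
  freq D (code D) (2 * Ev))%N.
Proof. by rewrite !freqE -card_Rp part_Rp. Qed.

Lemma wt_in c : c \in code D ->
  lee_weight D c \in [:: 0; 2 * Tv; Tv + Ev; 2 * Ev]%N.
Proof.
rewrite K_img => /imsetP[r _ ->]; rewrite !inE.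
case: (wt_cases r) => -> -> -> ->.
case: (eqVneq r.1.1 0%R) => [d0|nz] /=.
  have -> : Z2 r = Z1 r by rewrite /Z1 /Z2 d0 add0r.
  by case: (Z1 r).
by case: (Z1 r); case: (Z2 r).
Qed.

Lemma nz_wt c : c \in code D -> (c != zero_word F m) = (lee_weight D c != 0%N).
Proof.
rewrite K_img => /imsetP[[[d e] f] hr ->].
apply/idP/idP; last by apply: contra => /eqP ->; rewrite wt_zero.
apply: contra; case: (wt_cases ((d, e), f)) => -> _ _ _ /andP[/eqP /= d0 z1].
move: hr z1; rewrite /Rp /Z1 !in_setX /= => /andP[/andP[_ he] hf] /and3P[h1 h2 _].
move: h1 h2; rewrite (K1 he) (K1 hf) => /eqP e0 /eqP f0'.
by rewrite -cw0 d0 e0 f0'.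
Qed.

End Main.

Lemma sub_iff (T : finType) (A B : {set T}) : (A \subset B) = (#|A :|: B| == #|B|).
Proof.
apply/idP/eqP => [/setUidPr -> //|h].
have H := subset_cardP (esym h) (subsetUr A B).
by apply/subsetP => x xA; rewrite (H x) inE xA.
Qed.

Lemma setT_iff m (A : {set 'I_m}) : (A == setT) = (#|A| == m).
Proof.
apply/eqP/eqP => [->|h]; first by rewrite cardsT card_ord.
have e : #|A| = #|[set: 'I_m]| by rewrite cardsT card_ord.
by apply/setP; apply/(subset_cardP e); apply: subsetT.
Qed.

Lemma arith1 (Z X Y M f1 : nat) : (Y <= X -> X <= M -> 0 < Y -> 2*M <= Z ->
  Z = 1 + f1 + 2*(X - Y) + (Y - 1) -> 0 < f1)%N.
Proof. lia. Qed.
Lemma arith2 (Z X Y f1 : nat) : (Y <= X)%N -> (0 < Y)%N ->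
  (Z = 1 + f1 + 2*(X - Y) + (Y - 1))%N -> Posz f1 = ((Posz Z) - 2 * Posz X + Posz Y)%R.
Proof. lia. Qed.
Lemma arith3 (X Y : nat) : (Y <= X)%N -> Posz (2 * (X - Y))%N = (2 * (Posz X - Posz Y))%R.
Proof. lia. Qed.
Lemma arith4 (Y : nat) : (0 < Y)%N -> Posz (Y - 1)%N = (Posz Y - 1)%R.
Proof. lia. Qed.
Lemma ar_w (T E : nat) : (0 < T)%N -> (T < E)%N ->
  (2*T != 0)%N /\ (T+E != 0)%N /\ (2*E != 0)%N /\ (2*T != T+E)%N /\ (2*T != 2*E)%N /\ (T+E != 2*E)%N /\
   (2*T <= T + E)%N /\ (2*T <= 2*E)%N.
Proof. move=> *; repeat split; try apply/eqP; lia. Qed.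
Lemma ar_e2 q m b ab : (1 < q -> b <= ab -> ab <= m ->
  (0 < 2*(q^(m-b) - q^(m-ab))) = (ab != b))%N.
Proof. move=> q1 h1 h2; rewrite muln_gt0 /= subn_gt0 ltn_exp2l //; apply/idP/idP; lia. Qed.
Lemma ar_e3 q m ab : (1 < q -> ab <= m -> (0 < q^(m-ab) - 1) = (ab != m))%N.
Proof. move=> q1 h2; rewrite subn_gt0 -{1}(expn0 q) ltn_exp2l //; apply/idP/idP; lia. Qed.

Local Close Scope ring_scope.

Theorem mainTheorem3 (F : finFieldType) (m : nat) (A B C : {set 'I_m}) :
  (2 <= m)%N -> A != set0 -> B != set0 -> C != set0 -> (#|B| < m)%N ->
  let q := #|F| in
  let a := #|A| in let b := #|B| in let c := #|C| in let ab := #|A :|: B| in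
  let D := @S3 F m A B C in
  let K := code D in
  let w1 := (2 * (q - 1) * q ^ (a + c - 1) * (q ^ m - q ^ b))%N in
  let w2 := ((q - 1) * q ^ (a + c - 1) * (2 * q ^ m - q ^ b))%N in
  let w3 := (2 * (q - 1) * q ^ (m + a + c - 1))%N in
  [/\ is_R_linear D K,
      #|D| = (q ^ (a + c) * (q ^ m - q ^ b))%N /\ #|K| = (q ^ (m + a + c))%N,
      min_lee_weight D K w1,
      [/\ freq D K 0 = 1%N,
          Posz (freq D K w1) =
            ((q ^ (m + a + c))%:Z - 2 * (q ^ (m - b))%:Z + (q ^ (m - ab))%:Z)%R,
          Posz (freq D K w2) = (2 * ((q ^ (m - b))%:Z - (q ^ (m - ab))%:Z))%R,
          Posz (freq D K w3) = ((q ^ (m - ab))%:Z - 1)%R &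
          (forall cw, cw \in K ->
             lee_weight D cw \in [:: 0%N; w1; w2; w3])] &
      ((A :|: B == setT) || (A \subset B) -> num_weights D K = 2%N) /\
      (~~ ((A :|: B == setT) || (A \subset B)) -> num_weights D K = 3%N)].
Proof.
move=> h2m hA hB0 hC hBm q a b c ab D K w1 w2 w3.
have hm : (0 < m)%N by apply: leq_trans h2m.
have q1 := @q_gt1 F.
have aP : (0 < a)%N by rewrite card_gt0.
have hbm : (q ^ b <= q ^ m)%N by rewrite leq_exp2l // ltnW.
have ew1 : w1 = (2 * Tv F A B C)%N by rewrite /w1 /Tv !mulnA.
have ew3 : w3 = (2 * Ev F A C)%N by rewrite /w3 /Ev !mulnA.
have ew2 : w2 = (Tv F A B C + Ev F A C)%N.
  rewrite /w2 /Tv /Ev.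
  have -> : (2 * q ^ m - q ^ b = (q ^ m - q ^ b) + q ^ m)%N by lia.
  have -> : (q ^ (m + a + c - 1) = q ^ (a + c - 1) * q ^ m)%N.
    rewrite -expnD; congr (expn _ _); lia.
  ring.
have t0 := Tv_gt0 F A C hBm; have te := Tv_lt_Ev F C hA hm hBm.
have hf0 := f0 F C hA hm hBm; have hf2 := f2 F C hA hm hBm.
have hf3 := f3 F C hA hm hBm; have hfs := fsum F C hA hm hBm.
rewrite -/D -/K -ew2 -ew1 -ew3 in hf0 hf2 hf3 hfs.
have hwin : forall cw, cw \in K -> lee_weight D cw \in [:: 0%N; w1; w2; w3].
  by move=> cw hc; rewrite ew1 ew2 ew3; apply: wt_in.
have hab : (b <= ab)%N by rewrite subset_leq_card // subsetUr.
have habm : (ab <= m)%N by rewrite -[X in (_ <= X)%N]card_ord max_card.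
have XY : (q ^ (m - ab) <= q ^ (m - b))%N by rewrite leq_exp2l // leq_sub2l.
have XM : (q ^ (m - b) <= q ^ m)%N by rewrite leq_exp2l // leq_subr.
have Y1 : (0 < q ^ (m - ab))%N by rewrite expn_gt0 ltnW.
have ZM : (2 * q ^ m <= q ^ (m + a + c))%N.
  rewrite -addnA expnD mulnC leq_mul2l; apply/orP; right.
  apply: leq_trans (q_gt1 F) _; rewrite -{1}[#|F|]expn1 leq_exp2l //; try exact: (q_gt1 F); apply: (leq_trans aP); apply: leq_addr.
set f1 := freq D K w1.
have f1pos : (0 < f1)%N by apply: (arith1 XY XM Y1 ZM); rewrite hfs hf0 hf2 hf3.
have [n1 [n2 [n3 [d12 [d13 [d23 [l12 l13]]]]]]] := ar_w t0 te.
have nzw : forall c, c \in K -> (c != zero_word F m) = (lee_weight D c != 0%N).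
  by move=> cw hc; apply: nz_wt.
split.
- exact: lin.
- split; first by rewrite card_D expnD; ring.
  by rewrite /K K_img card_in_imset ?card_Rp //; apply: cw_inj.
- split.
    move: f1pos; rewrite /f1 /freq => /card_gt0P[cw]; rewrite inE => /andP[hc /eqP hw].
    exists cw => //; split => //; rewrite nzw // hw ew1.
    by [].
  move=> cw hc; rewrite nzw // => nz; have := hwin cw hc.
  rewrite !inE (negbTE nz) /= ew1 ew2 ew3.
  by case/or3P => /eqP ->.
- split => //.
  + by apply: (arith2 XY Y1); rewrite hfs hf0 hf2 hf3.
  + by rewrite hf2; apply: arith3.
  + by rewrite hf3; apply: arith4.
- have hpos : forall x, (0 < freq D K x)%N -> x \in [:: 0%N; w1; w2; w3].
    move=> x /card_gt0P[cw]; rewrite inE => /andP[hc /eqP <-]; exact: hwin.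
  have nw : num_weights D K =
      ((0 < freq D K w1) + (0 < freq D K w2) + (0 < freq D K w3))%N.
    rewrite /num_weights.
    have uw : uniq [:: w1; w2; w3].
      by rewrite /= !inE ew1 ew2 ew3 negb_or d12 d13 d23.
    rewrite (perm_size (uniq_perm (undup_uniq _) (filter_uniq (fun x => 0 < freq D K x)%N uw) _)).
      by rewrite /=; case: (0 < freq D K w1)%N; case: (0 < freq D K w2)%N; case: (0 < freq D K w3)%N.
    move=> x; rewrite mem_undup mem_filter.
    apply/mapP/andP => [[cw hc ->]|[hp hx]].
      move: hc; rewrite mem_filter mem_enum => /andP[nz hc].
      split; first by apply/card_gt0P; exists cw; rewrite inE hc eqxx.
      have nz' : lee_weight D cw != 0%N by rewrite -nzw.
      by have := hwin cw hc; rewrite !inE (negbTE nz') /=.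
    case/card_gt0P: hp => cw; rewrite inE => /andP[hc /eqP hw]; exists cw => //.
    rewrite mem_filter mem_enum hc andbT nzw // hw.
    move: hx; rewrite !inE ew1 ew2 ew3.
    by case/or3P => /eqP ->.
  have e2 : (0 < freq D K w2)%N = ~~ (A \subset B).
    by rewrite hf2 sub_iff ar_e2.
  have e3 : (0 < freq D K w3)%N = (A :|: B != setT).
    by rewrite hf3 setT_iff ar_e3.
  rewrite nw f1pos e2 e3; split.
    case/orP => [/eqP hT|hs].
      rewrite hT eqxx /=.
      have : ~~ (A \subset B).
        apply/negP => hs; move: hT; rewrite (setUidPr hs) => hT.
        by move: hBm; rewrite hT cardsT card_ord ltnn.
      by move/negbTE => ->.
    rewrite hs /=.
    have -> : (A :|: B != setT) = true.
      apply/negP => /eqP hT; move: hBm; rewrite -(setUidPr hs) hT cardsT card_ord ltnn.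
      by [].
    by [].
  by rewrite negb_or => /andP[-> ->].
Qed.
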